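(* Let $(\mathcal{F},\langle\cdot,\cdot\rangle_\Xi)$ be a real inner product space (e.g. a finite-dimensional space of functions on $\Xi$) with norm $\|\cdot\|_\Xi$. Let $a,f\in\mathcal{F}$ and $\delta\ge 0$ with $\|f-a\|_\Xi\le\delta$, and let $\mathcal{S}(a,\delta)=\{u\in\mathcal{F}:\|u-a\|_\Xi\le\delta\}$. Let $g\in\mathcal{F}$ and let $h$ be the metric projection of $g$ onto $\mathcal{S}(a,\delta)$, i.e. $h\in\arg\min_{u\in\mathcal{S}(a,\delta)}\|u-g\|_\Xi$. Then $\|f-h\|_\Xi\le\|f-g\|_\Xi$. Moreover, if $g\notin\mathcal{S}(a,\delta)$, then $\|f-h\|_\Xi<\|f-g\|_\Xi$ and, with $\Delta:=\|g-h\|_\Xi$, $$\Delta\sqrt{\frac{\Delta}{\delta+\Delta}}\;\le\;\|f-g\|_\Xi-\|f-h\|_\Xi\;\le\;\Delta.$$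
   Context: Here $f$ is the (unknown) target function, $a$ an anchor function with certified tolerance $\delta$, and $g$ an arbitrary approximation of $f$. *)

(* Defs.v *)
From mathcomp Require Import all_boot all_order all_algebra.
From mathcomp Require Import reals.
Set Implicit Arguments. Unset Strict Implicit. Unset Printing Implicit Defensive.
Import Order.TTheory GRing.Theory Num.Theory.
Local Open Scope ring_scope.

Definition is_inner_product (R : realType) (V : lmodType R)
  (ip : V -> V -> R) : Prop :=
  [/\ (forall u v, ip u v = ip v u),
      (forall a u v w, ip (a *: u + v) w = a * ip u w + ip v w),
      (forall u, 0 <= ip u u) &
      (forall u, ip u u = 0 -> u = 0)].

Definition ipnorm (R : realType) (V : lmodType R) (ip : V -> V -> R) (u : V) : R :=
  Num.sqrt (ip u u).

Definition cball_ip (R : realType) (V : lmodType R) (ip : V -> V -> R)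
  (a : V) (delta : R) : V -> Prop :=
  fun u => ipnorm ip (u - a) <= delta.

Definition is_metric_projection (R : realType) (V : lmodType R) (ip : V -> V -> R)
  (S : V -> Prop) (g h : V) : Prop :=
  S h /\ forall u, S u -> ipnorm ip (h - g) <= ipnorm ip (u - g).

(* Main.v *)
Require Import Defs.
From mathcomp Require Import all_boot all_order all_algebra.
From mathcomp Require Import reals.
From mathcomp Require Import ring lra.
Import Order.TTheory GRing.Theory Num.Theory.
Local Open Scope ring_scope.
Set Implicit Arguments.

Lemma ip0l (R : realType) (V : lmodType R) (ip : V -> V -> R)
  (Hip : is_inner_product ip) w : ip 0 w = 0.
Proof.
case: Hip => _ HL _ _.
have := HL 1 0 0 w; rewrite scaler0 addr0 mul1r => H.
by move/eqP: H; rewrite -{1}(addr0 (ip 0 w)) (inj_eq (addrI _)) eq_sym => /eqP.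
Qed.

Lemma ipDl (R : realType) (V : lmodType R) (ip : V -> V -> R)
  (Hip : is_inner_product ip) u v w : ip (u + v) w = ip u w + ip v w.
Proof. case: Hip => _ HL _ _. by have := HL 1 u v w; rewrite scale1r mul1r. Qed.

Lemma ipZl (R : realType) (V : lmodType R) (ip : V -> V -> R)
  (Hip : is_inner_product ip) c u w : ip (c *: u) w = c * ip u w.
Proof.
have H0 := ip0l Hip w. case: Hip => _ HL _ _.
by have := HL c u 0 w; rewrite addr0 H0 addr0.
Qed.

Lemma ipNl (R : realType) (V : lmodType R) (ip : V -> V -> R)
  (Hip : is_inner_product ip) u w : ip (- u) w = - ip u w.
Proof. by rewrite -scaleN1r (ipZl Hip) mulN1r. Qed.

Lemma ipBl (R : realType) (V : lmodType R) (ip : V -> V -> R)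
  (Hip : is_inner_product ip) u v w : ip (u - v) w = ip u w - ip v w.
Proof. by rewrite (ipDl Hip) (ipNl Hip). Qed.

Lemma ipC (R : realType) (V : lmodType R) (ip : V -> V -> R)
  (Hip : is_inner_product ip) u w : ip u w = ip w u.
Proof. by case: Hip. Qed.

Lemma ipDr (R : realType) (V : lmodType R) (ip : V -> V -> R)
  (Hip : is_inner_product ip) u v w : ip w (u + v) = ip w u + ip w v.
Proof. by rewrite !(ipC Hip w) (ipDl Hip). Qed.

Lemma ipZr (R : realType) (V : lmodType R) (ip : V -> V -> R)
  (Hip : is_inner_product ip) c u w : ip w (c *: u) = c * ip w u.
Proof. by rewrite !(ipC Hip w) (ipZl Hip). Qed.

Lemma ipBr (R : realType) (V : lmodType R) (ip : V -> V -> R)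
  (Hip : is_inner_product ip) u v w : ip w (u - v) = ip w u - ip w v.
Proof. by rewrite !(ipC Hip w) (ipBl Hip). Qed.

Lemma ipge0 (R : realType) (V : lmodType R) (ip : V -> V -> R)
  (Hip : is_inner_product ip) u : 0 <= ip u u.
Proof. by case: Hip. Qed.

Lemma ipeq0 (R : realType) (V : lmodType R) (ip : V -> V -> R)
  (Hip : is_inner_product ip) u : ip u u = 0 -> u = 0.
Proof. by case: Hip => _ _ _; apply. Qed.

Lemma ipnormE (R : realType) (V : lmodType R) (ip : V -> V -> R)
  (Hip : is_inner_product ip) u : ipnorm ip u ^+ 2 = ip u u.
Proof. by rewrite /ipnorm sqr_sqrtr // (ipge0 Hip). Qed.

Lemma ipnorm_ge0 (R : realType) (V : lmodType R) (ip : V -> V -> R) u :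
  0 <= ipnorm ip u.
Proof. exact: sqrtr_ge0. Qed.

Lemma cs (R : realType) (V : lmodType R) (ip : V -> V -> R)
  (Hip : is_inner_product ip) x y : ip x y <= ipnorm ip x * ipnorm ip y.
Proof.
set nx := ipnorm ip x; set ny := ipnorm ip y.
have Ex : nx ^+ 2 = ip x x by apply: ipnormE.
have Ey : ny ^+ 2 = ip y y by apply: ipnormE.
have gx : 0 <= nx := @ipnorm_ge0 _ _ ip x.
have gy : 0 <= ny := @ipnorm_ge0 _ _ ip y.
have H := ipge0 Hip (ny *: x - nx *: y).
rewrite !(ipBl Hip) !(ipBr Hip) !(ipZl Hip) !(ipZr Hip) (ipC Hip y x) -Ex -Ey in H.
have [p0|p0] := eqVneq (nx * ny) 0.
  have /orP[/eqP x0|/eqP y0] : (nx == 0) || (ny == 0) by rewrite -mulf_eq0 p0.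
    have : x = 0 by apply: (ipeq0 Hip); rewrite -Ex x0 expr0n.
    by move=> ->; rewrite (ip0l Hip) p0.
  have : y = 0 by apply: (ipeq0 Hip); rewrite -Ey y0 expr0n.
  by move=> ->; rewrite (ipC Hip) (ip0l Hip) p0.
have pp : 0 < nx * ny by rewrite lt_def p0 mulr_ge0.
nra.
Qed.
Lemma scalar_bound (R : realType) (A B D c dl : R) :
  0 <= dl -> 0 < D -> 0 <= B -> 0 <= A -> 0 <= c ->
  A ^+ 2 = B ^+ 2 + D ^+ 2 + 2 * c ->
  D * B ^+ 2 <= 2 * dl * c ->
  D * Num.sqrt (D / (dl + D)) <= A - B.
Proof.
move=> hdl hD hB hA hc hA2 hB2.
set s := Num.sqrt _.
have hs : 0 <= s by apply: sqrtr_ge0.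
have hdD : 0 < dl + D by lra.
have hs2 : s ^+ 2 * (dl + D) = D.
  rewrite /s sqr_sqrtr; last by apply: divr_ge0; lra.
  by rewrite mulrAC -mulrA divff ?mulr1 // gt_eqF.
suff : (D * s + B) ^+ 2 <= A ^+ 2 by move=> h; nra.
have [dl0|dlp] := eqVneq dl 0.
  have hb2 : B ^+ 2 <= 0.
    by move: hB2; rewrite dl0 mulr0 mul0r => h; rewrite -(pmulr_rle0 _ hD).
  have B0 : B = 0 by apply: le_anti; apply/andP; split; nra.
  have s1 : s ^+ 2 = 1.
    by move: hs2; rewrite dl0 add0r -{2}(mul1r D) => /(mulIf (lt0r_neq0 hD)).
  rewrite B0 addr0 exprMn s1 hA2; nra.
have hdl' : 0 < dl by rewrite lt_def dlp.
have k1 : 0 <= D * ((B - s * dl) ^+ 2 * (dl + D)).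
  by apply: mulr_ge0; [lra| apply: mulr_ge0; [apply: sqr_ge0|lra]].
have e1 : D ^+ 2 * s ^+ 2 * (dl * (dl + D)) = D ^+ 2 * D * dl.
  transitivity (D ^+ 2 * dl * (s ^+ 2 * (dl + D))); first by ring.
  by rewrite hs2; ring.
have e2 : D * s ^+ 2 * dl ^+ 2 * (dl + D) = D ^+ 2 * dl ^+ 2.
  transitivity (D * dl ^+ 2 * (s ^+ 2 * (dl + D))); first by ring.
  by rewrite hs2; ring.
have e3 : D * B ^+ 2 * (dl + D) <= 2 * dl * c * (dl + D).
  by rewrite ler_pM2r.
have k2 : (D * s + B) ^+ 2 * (dl * (dl + D)) <= A ^+ 2 * (dl * (dl + D)).
  have -> : (D * s + B) ^+ 2 * (dl * (dl + D)) =
     D ^+ 2 * s ^+ 2 * (dl * (dl + D)) + 2 * D * s * B * dl * (dl + D) + B ^+ 2 * dl * (dl + D) by ring.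
  have k1e : D * ((B - s * dl) ^+ 2 * (dl + D)) = D * B ^+ 2 * (dl + D) - 2 * D * s * B * dl * (dl + D) + D * s ^+ 2 * dl ^+ 2 * (dl + D) by ring.
  rewrite k1e in k1.
  rewrite e1; rewrite e2 in k1; rewrite hA2.
  have -> : (B ^+ 2 + D ^+ 2 + 2 * c) * (dl * (dl + D)) = B ^+ 2 * dl * (dl + D) + D ^+ 2 * dl * (dl + D) + 2 * dl * c * (dl + D) by ring.
  have -> : D ^+ 2 * dl * (dl + D) = D ^+ 2 * dl ^+ 2 + D ^+ 2 * D * dl by ring.
  lra.
have k3 : 0 < dl * (dl + D) by apply: mulr_gt0.
by rewrite -(ler_pM2r k3).
Qed.

Lemma ipE (R : realType) (V : lmodType R) (ip : V -> V -> R)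
  (Hip : is_inner_product ip) x y k :
  ip (x + k *: y) (x + k *: y) = ip x x + 2 * k * ip x y + k ^+ 2 * ip y y.
Proof.
rewrite !(ipDl Hip) !(ipDr Hip) !(ipZl Hip) !(ipZr Hip) (ipC Hip y x); ring.
Qed.

Lemma norm_le (R : realType) (V : lmodType R) (ip : V -> V -> R)
  (Hip : is_inner_product ip) x (dl : R) : 0 <= dl ->
  (ipnorm ip x <= dl) <-> (ip x x <= dl ^+ 2).
Proof.
move=> hdl; have E := ipnormE Hip x; have G := @ipnorm_ge0 _ _ ip x.
split => h; nra.
Qed.
Arguments norm_le {R V ip} Hip x dl _.

Lemma norm_le2 (R : realType) (V : lmodType R) (ip : V -> V -> R)
  (Hip : is_inner_product ip) x y :
  (ipnorm ip x <= ipnorm ip y) <-> (ip x x <= ip y y).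
Proof.
have E := ipnormE Hip x; have G := @ipnorm_ge0 _ _ ip x.
have E' := ipnormE Hip y; have G' := @ipnorm_ge0 _ _ ip y.
split => h; nra.
Qed.

Lemma vi (R : realType) (V : lmodType R) (ip : V -> V -> R)
  (Hip : is_inner_product ip) (a g h : V) (dl : R) (hdl : 0 <= dl)
  (Hh : is_metric_projection ip (cball_ip ip a dl) g h) u
  (hu : cball_ip ip a dl u) : ip (g - h) (u - h) <= 0.
Proof.
case: Hh => hB hmin.
rewrite leNgt; apply/negP => cpos.
set c := ip (g - h) (u - h) in cpos.
set d := ip (u - h) (u - h).
have dge : 0 <= d by apply: ipge0.
set t := c / (c + d).
have cdp : 0 < c + d by lra.
have tcd : t * (c + d) = c by rewrite /t mulrVK // unitfE gt_eqF.
have tp : 0 < t by rewrite /t divr_gt0.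
have t1 : t <= 1 by rewrite /t ler_pdivrMr // mul1r; lra.
set ut := h + t *: (u - h).
have hut : cball_ip ip a dl ut.
  rewrite /cball_ip (norm_le Hip _ _ hdl).
  have -> : ut - a = (h - a) + t *: (u - h) by rewrite /ut addrAC.
  rewrite (ipE Hip).
  move: hB hu; rewrite /cball_ip !(norm_le Hip _ _ hdl).
  have -> : u - a = (h - a) + 1 *: (u - h) by rewrite scale1r; symmetry; rewrite addrC addrA subrK.
  rewrite (ipE Hip) expr1n !mul1r => hX hY.
  set X := ip (h - a) (h - a) in hX hY *.
  set Q := ip (h - a) (u - h) in hY *.
  rewrite -/d mulr1 in hY *.
  have h1 : t ^+ 2 * d <= t * d.
    have : 0 <= (1 - t) * t * d by apply: mulr_ge0; [apply: mulr_ge0|]; lra.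
    move=> H; rewrite expr2; nra.
  have h2 : 0 <= (1 - t) * (dl ^+ 2 - X) by apply: mulr_ge0; lra.
  have h3 : 0 <= t * (dl ^+ 2 - (X + 2 * Q + d)) by apply: mulr_ge0; lra.
  nra.
have := hmin _ hut; rewrite (norm_le2 Hip).
have -> : ut - g = (h - g) + t *: (u - h) by rewrite /ut addrAC.
rewrite (ipE Hip).
have -> : ip (h - g) (u - h) = - c by rewrite /c -(ipNl Hip) opprB.
rewrite -/d => H.
nra.
Qed.

Lemma ipNr (R : realType) (V : lmodType R) (ip : V -> V -> R)
  (Hip : is_inner_product ip) u w : ip w (- u) = - ip w u.
Proof. by rewrite !(ipC Hip w) (ipNl Hip). Qed.

Lemma ipnormN (R : realType) (V : lmodType R) (ip : V -> V -> R)
  (Hip : is_inner_product ip) x : ipnorm ip (- x) = ipnorm ip x.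
Proof. by rewrite /ipnorm (ipNl Hip) (ipC Hip) (ipNl Hip) opprK. Qed.

Unset Implicit Arguments.

Theorem mainTheorem3 (R : realType) (V : lmodType R) (ip : V -> V -> R)
  (Hip : is_inner_product ip) (a f g h : V) (delta : R)
  (Hdelta : 0 <= delta) (Hf : ipnorm ip (f - a) <= delta)
  (Hh : is_metric_projection ip (cball_ip ip a delta) g h) :
  ipnorm ip (f - h) <= ipnorm ip (f - g) /\
  (~ cball_ip ip a delta g ->
     let Delta := ipnorm ip (g - h) in
     ipnorm ip (f - h) < ipnorm ip (f - g) /\
     Delta * Num.sqrt (Delta / (delta + Delta))
       <= ipnorm ip (f - g) - ipnorm ip (f - h) /\
     ipnorm ip (f - g) - ipnorm ip (f - h) <= Delta).
Proof.
move: (Hh) => [hB hmin].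
set A := ipnorm ip (f - g); set B := ipnorm ip (f - h); set D := ipnorm ip (g - h).
have EA : A ^+ 2 = ip (f - g) (f - g) by apply: ipnormE.
have EB : B ^+ 2 = ip (f - h) (f - h) by apply: ipnormE.
have ED : D ^+ 2 = ip (g - h) (g - h) by apply: ipnormE.
have GA : 0 <= A by apply: ipnorm_ge0.
have GB : 0 <= B by apply: ipnorm_ge0.
have GD : 0 <= D by apply: ipnorm_ge0.
set c := - ip (f - h) (g - h).
have hA2 : A ^+ 2 = B ^+ 2 + D ^+ 2 + 2 * c.
  rewrite EA.
  have -> : f - g = (f - h) + (-1) *: (g - h) by rewrite scaleN1r opprB addrA subrK.
  rewrite (ipE Hip) -EB -ED /c; ring.
have vif : ip (g - h) (f - h) <= 0 := vi Hip Hdelta Hh Hf.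
have hc : 0 <= c by rewrite /c (ipC Hip); lra.
split; first by nra.
move=> hg /=; rewrite -/D.
have Dp : 0 < D.
  rewrite lt_def GD andbT; apply/eqP => D0; apply: hg.
  have : g - h = 0 by apply: (ipeq0 Hip); rewrite -ED D0 expr0n.
  by move/subr0_eq => ->.
split; first by nra.
split; last first.
  have cs1 := cs Hip (f - h) (h - g).
  rewrite -[h - g]opprB (ipnormN Hip) -/B -/D (ipC Hip) (ipNl Hip) (ipC Hip) -/c in cs1.
  nra.
set w := g - h.
set k := delta / D.
set u0 := a + k *: w.
have kD : k * D = delta by rewrite /k mulfVK // gt_eqF.
have hu0 : cball_ip ip a delta u0.
  rewrite /cball_ip (norm_le Hip _ _ Hdelta) /u0 addrC addKr (ipZl Hip) (ipZr Hip) -ED.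
  by rewrite -kD exprMn mulrA -expr2.
have vi0 := vi Hip Hdelta Hh hu0.
have e0 : u0 - h = (a - h) + k *: w by rewrite /u0 addrAC.
rewrite e0 (ipDr Hip) (ipZr Hip) -ED -[a - h]opprB (ipNr Hip) in vi0.
set P := ip w (h - a) in vi0.
set m := ipnorm ip (h - a).
have Gm : 0 <= m by apply: ipnorm_ge0.
have Em : m ^+ 2 = ip (h - a) (h - a) by apply: ipnormE.
have hm : m <= delta by exact: hB.
have csP : P <= D * m by exact: cs Hip w (h - a).
have PdD : P = delta * D by rewrite -kD; apply: le_anti; apply/andP; split; nra.
have mdl : m = delta by apply: le_anti; apply/andP; split; nra.
have wz : delta *: w = D *: (h - a).
  apply/eqP; rewrite -subr_eq0; apply/eqP; apply: (ipeq0 Hip).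
  rewrite -scaleNr (ipE Hip) (ipZl Hip) (ipZr Hip) (ipZl Hip) -ED -/P -Em mdl PdD; ring.
have hf2 := Hf; rewrite (norm_le Hip _ _ Hdelta) in hf2.
have ef : f - a = (f - h) + 1 *: (h - a) by rewrite scale1r addrA subrK.
rewrite ef (ipE Hip) -EB -Em mdl in hf2.
have key : D * ip (f - h) (h - a) = - (delta * c).
  by rewrite -(ipZr Hip) -wz (ipZr Hip) /c /w mulrN opprK.
have hB2 : D * B ^+ 2 <= 2 * delta * c by nra.
exact: scalar_bound Hdelta Dp GB GA hc hA2 hB2.
Qed.
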